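(* Assume $\operatorname{rank}(X)=n$ and $\xi_r(\varpi^N)<1/2$ for some $r\in\{0,\ldots,N\}$. Let $A,A'\in\mathbb{R}^{n\times s}$ be comparable over $\varpi^N$ with associated permutation $\pi$ (i.e. $|I_i(A)\cap I_{\pi(i)}(A')|\ge\nu_n(X)$ for all $i\in\mathbb{S}$). Then for any norm $\|\cdot\|$ on $\mathbb{R}^{n\times s}$ there exists a number $D>0$ such that $$\|A'_\pi-A\|\le\frac{1}{D\big(1-2\xi_r(\varpi^N)\big)}\Big(\mathcal{J}(A')-\mathcal{J}(A)+2\delta_r(A)\Big),$$ where $A'_\pi=[a'_{\pi(1)}\ \cdots\ a'_{\pi(s)}]$.
   Context: Data: integers $n,s,N\ge1$ and a dataset $\varpi^N=((x_1,y_1),\ldots,(x_N,y_N))$ with $x_t\in\mathbb{R}^n$, $y_t\in\mathbb{R}$; $X=[x_1\ \cdots\ x_N]\in\mathbb{R}^{n\times N}$. Let $\mathbb{T}=\{1,\ldots,N\}$, $\mathbb{S}=\{1,\ldots,s\}$. For $A=[a_1\ \cdots\ a_s]\in\mathbb{R}^{n\times s}$, $\sigma_A:\mathbb{T}\to\mathbb{S}$ is a switching signal satisfying $\sigma_A(t)\in\arg\min_{i\in\mathbb{S}}|y_t-x_t^\top a_i|$ for all $t$, selected uniquely by a fixed rule depending only on $A$ and the data (among all admissible choices, one maximizing $\min_{i}|I_i(A)|$, ties then broken by assigning the smallest admissible index). $I_i(A)=\{t\in\mathbb{T}:\sigma_A(t)=i\}$. $\phi(A)=\big(y_1-x_1^\top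 a_{\sigma_A(1)},\ldots,y_N-x_N^\top a_{\sigma_A(N)}\big)^\top$, $\mathcal{J}(A)=\|\phi(A)\|_1=\sum_t\min_i|y_t-a_i^\top x_t|$, $\phi_{\mathcal{T}}(A)$ its subvector indexed by $\mathcal{T}\subset\mathbb{T}$. $\mathcal{S}_r=\{w\in\mathbb{R}^N:\|w\|_0\le r\}$, $\delta_r(A)=\inf_{w\in\mathcal{S}_r}\|\phi(A)-w\|_1$. The $r$-th concentration ratio is $$\xi_r(\varpi^N)=\sup\Big\{\frac{\|\phi_{\mathcal{T}}(A)-\phi_{\mathcal{T}}(A')\|_1}{\|\phi(A)-\phi(A')\|_1}: A,A'\in\mathbb{R}^{n\times s},\ \mathcal{T}\subset\mathbb{T},\ \phi(A)\ne\phi(A'),\ |\mathcal{T}|\le r\Big\}.$$ Genericity index: for $\operatorname{rank}(X)=n$, $\nu_n(X)$ is the smallest integer $m$ such that every submatrix $X_{\mathcal{S}}$ formed by $m$ columns of $X$ has rank $n$. Comparability: $A,A'$ are comparable over $\varpi^N$ if there is a permutation $\pi$ of $\mathbb{S}$ with $|I_i(A)\cap I_{\pi(i)}(A')|\ge\nu_n(X)$ for all $i$. *)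

(* Defs.v *)
From HB Require Import structures.
From mathcomp Require Import all_boot all_order all_algebra all_fingroup.
From mathcomp Require Import boolp classical_sets reals.
Set Implicit Arguments. Unset Strict Implicit. Unset Printing Implicit Defensive.
Import Order.TTheory GRing.Theory Num.Theory.
Local Open Scope ring_scope.

Section Switched.
Variables (R : realType) (n s N : nat).
(* Regressors: X = [x_1 ... x_N] (column t is x_t); outputs y t = y_t. *)
Variables (X : 'M[R]_(n, N)) (y : 'I_N -> R).

Definition resid (A : 'M[R]_(n, s)) (t : 'I_N) (i : 'I_s) : R :=
  y t - (X^T *m A) t i.

Definition admissible (A : 'M[R]_(n, s)) (sg : {ffun 'I_N -> 'I_s}) : bool :=
  [forall t, forall i, `|resid A t (sg t)| <= `|resid A t i|].

Definition Iset (sg : {ffun 'I_N -> 'I_s}) (i : 'I_s) : {set 'I_N} :=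
  [set t | sg t == i].

(* min_i |I_i| (N is the neutral value; all cardinals are <= N) *)
Definition mincard (sg : {ffun 'I_N -> 'I_s}) : nat :=
  \big[minn/N]_(i : 'I_s) #|Iset sg i|.

(* lexicographic code of (sg 1, ..., sg N) *)
Definition lexcode (sg : {ffun 'I_N -> 'I_s}) : nat :=
  \sum_(t : 'I_N) (sg t : nat) * s ^ (N - 1 - t).

Definition maxmincard (A : 'M[R]_(n, s)) : nat :=
  \max_(sg : {ffun 'I_N -> 'I_s} | admissible A sg) mincard sg.

Definition best_signals (A : 'M[R]_(n, s)) : {set {ffun 'I_N -> 'I_s}} :=
  [set sg | admissible A sg && (mincard sg == maxmincard A)].

(* the selected switching signal sigma_A: among the maximizers, the one
   assigning the smallest indices (lexicographically smallest).
   It is [Some _] whenever s >= 1. *)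
Definition sigmaA (A : 'M[R]_(n, s)) : option {ffun 'I_N -> 'I_s} :=
  [pick sg in best_signals A |
     [forall tau in best_signals A, (lexcode sg <= lexcode tau)%N]].

Definition I_ (A : 'M[R]_(n, s)) (i : 'I_s) : {set 'I_N} :=
  if sigmaA A is Some sg then Iset sg i else finset.set0.

Definition phi (A : 'M[R]_(n, s)) (t : 'I_N) : R :=
  if sigmaA A is Some sg then resid A t (sg t) else 0.

Definition J (A : 'M[R]_(n, s)) : R := \sum_(t : 'I_N) `|phi A t|.

Definition delta (r : nat) (A : 'M[R]_(n, s)) : R :=
  inf (fun d : R => exists w : 'I_N -> R,
         (#|[pred t : 'I_N | w t != 0%R]| <= r)%N /\ d = \sum_(t : 'I_N) `|phi A t - w t|).

Definition xi (r : nat) : R :=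
  sup (fun q : R => exists (A A' : 'M[R]_(n, s)) (T : {set 'I_N}),
         (#|T| <= r)%N /\ phi A <> phi A' /\
         q = (\sum_(t in T) `|phi A t - phi A' t|) /
             (\sum_(t : 'I_N) `|phi A t - phi A' t|)).

(* genericity index nu_n(X): smallest m such that every submatrix formed by
   m (distinct) columns of X has rank n (m ranges over 0..N). *)
Definition all_subm_full (m : nat) : bool :=
  [forall f : {ffun 'I_m -> 'I_N}, injectiveb f ==> (\rank (colsub f X) == n)].

Definition nu : nat := \big[minn/N]_(m < N.+1 | all_subm_full m) m.

Definition comparable_with (A A' : 'M[R]_(n, s)) (pi : {perm 'I_s}) : Prop :=
  forall i : 'I_s, (nu <= #|I_ A i :&: I_ A' (pi i)|)%N.

End Switched.

Definition is_norm (R : realType) (n s : nat) (nrm : 'M[R]_(n, s) -> R) : Prop :=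
  [/\ forall M, nrm M = 0 -> M = 0,
      forall (a : R) M, nrm (a *: M) = `|a| * nrm M
    & forall M1 M2, nrm (M1 + M2) <= nrm M1 + nrm M2].

(* Main.v *)
Require Import Defs.
From HB Require Import structures.
From mathcomp Require Import all_boot all_order all_algebra all_fingroup.
From mathcomp Require Import boolp classical_sets reals ring lra.
Import Order.TTheory GRing.Theory Num.Theory.
Local Open Scope ring_scope.

Section Aux.
Variables (R : realType) (n s N : nat) (X : 'M[R]_(n, N)) (y : 'I_N -> R).

Lemma norm_zero {nrm : 'M[R]_(n, s) -> R} : is_norm nrm -> nrm 0 = 0.
Proof.
case=> _ hZ _; have := hZ 0 0; rewrite scale0r normr0 mul0r //.
Qed.

Lemma norm_ge0 (nrm : 'M[R]_(n, s) -> R) M : is_norm nrm -> 0 <= nrm M.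
Proof.
move=> hn; have h0 := norm_zero hn; case: hn => _ hZ hD.
have := hD M ((-1) *: M); rewrite hZ scaleN1r subrr h0 normrN normr1 mul1r.
lra.
Qed.

Lemma nuP : all_subm_full X (nu X) || (nu X == N).
Proof.
rewrite /nu; apply: (big_ind (fun m => all_subm_full X m || (m == N))).
- by rewrite eqxx orbT.
- by move=> a b Ha Hb; rewrite /minn; case: ifP.
- by move=> i ->.
Qed.

Lemma rank_kill (S : {set 'I_N}) (u : 'rV[R]_n) :
  \rank X = n -> (nu X <= #|S|)%N ->
  (forall t, t \in S -> (u *m X) 0 t = 0) -> u = 0.
Proof.
move=> hr hS hu.
case/orP: nuP => [/forallP hF | /eqP hN].
- pose f := [ffun k : 'I_(nu X) => enum_val (widen_ord hS k)].
  have finj : injective f.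
    by move=> a b; rewrite !ffunE => /enum_val_inj /(congr1 val) /= /val_inj.
  have := hF f; rewrite (introT (injectiveP f) finj) /= => /eqP hrk.
  have rf : row_free (colsub f X) by rewrite /row_free hrk.
  apply: (row_free_inj rf); rewrite mul0mx; apply/matrixP => i k.
  rewrite [i]ord1 [RHS]mxE; apply: etrans (hu (f k) _); last first.
    by rewrite ffunE enum_valP.
  rewrite !mxE; apply: eq_bigr => j _; rewrite !mxE //.
- have hS' : S = [set: 'I_N]%SET.
    apply/eqP; rewrite eqEcard finset.subsetT cardsT card_ord -{1}hN hS //.
  have rf : row_free X by rewrite /row_free hr.
  apply: (@row_free_inj _ 1 _ _ X rf); rewrite mul0mx; apply/matrixP => i k.
  by rewrite [i]ord1 [RHS]mxE hu // hS' inE.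
Qed.

Lemma ident (A A' : 'M[R]_(n, s)) (pi : {perm 'I_s}) :
  \rank X = n -> comparable_with X y A A' pi ->
  (forall t, phi X y A t = phi X y A' t) -> colsub pi A' = A.
Proof.
move=> hr hc hphi; apply/matrixP => k i; rewrite mxE.
pose u : 'rV[R]_n := \row_j (A j i - A' j (pi i)).
suff : u = 0.
  by move/matrixP/(_ 0 k); rewrite !mxE => /eqP; rewrite subr_eq0 => /eqP ->.
apply: (rank_kill _ _ hr (hc i)) => t; rewrite inE => /andP [h1 h2].
have := hphi t; move: h1 h2; rewrite /I_ /phi.
case: (sigmaA X y A) => [sg|]; last by rewrite inE.
case: (sigmaA X y A') => [sg'|]; last by move=> _; rewrite inE.
rewrite !inE => /eqP -> /eqP ->; rewrite /resid => heq.
have e2 : (X^T *m A) t i = (X^T *m A') t (pi i).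
  by move/addrI: heq => /oppr_inj.
rewrite mxE (_ : \sum_j u 0 j * X j t = (X^T *m A) t i - (X^T *m A') t (pi i)).
  by rewrite e2 subrr.
rewrite !mxE -sumrB; apply: eq_bigr => j _; rewrite !mxE.
by rewrite mulrBl !(mulrC (X j t)).
Qed.


Lemma key (A A' : 'M[R]_(n, s)) (r : nat) (w : 'I_N -> R) :
  (#|[pred t : 'I_N | w t != 0%R]| <= r)%N ->
  (1 - 2 * xi s X y r) * \sum_t `|phi X y A t - phi X y A' t|
    <= J X y A' - J X y A + 2 * \sum_t `|phi X y A t - w t|.
Proof.
move=> hw; rewrite /J.
set p := phi X y A; set p' := phi X y A'.
set e := \sum_t `|p t - p' t|.
set T := [set t | w t != 0].
have hT : (#|T| <= r)%N by rewrite /T cardsE.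
have ha : \sum_(t in T) `|p t - p' t| <= xi s X y r * e.
  case: (eqVneq e 0) => he.
    rewrite he mulr0 big1 // => t _.
    exact: (psumr_eq0P (fun i _ => normr_ge0 _) he).
  have hpos : 0 < e by rewrite lt0r he sumr_ge0.
  have hne : p <> p'.
    move=> hpp; move: he; rewrite /e hpp.
    by under eq_bigr do rewrite subrr normr0; rewrite big1 ?eqxx.
  rewrite -ler_pdivrMr //; rewrite /xi.
  apply: ub_le_sup; last by exists A, A', T.
  exists 1 => q [B [B' [T' [_ [_ ->]]]]].
  set S1 := \sum_(t in T') _; set S2 := \sum_t _.
  have hS12 : S1 <= S2.
    by rewrite /S2 (bigID (mem T')) /= lerDl sumr_ge0.
  have hS1 : 0 <= S1 by rewrite sumr_ge0.
  case: (eqVneq S2 0) => h; first by rewrite h invr0 mulr0 ler01.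
  rewrite ler_pdivrMr ?mul1r // lt_neqAle eq_sym h /=; exact: le_trans hS12.
have hpt : forall t, `|p t| + `|p t - p' t|
    - 2 * (if t \in T then `|p t - p' t| else 0)
    - 2 * (if t \in T then 0 else `|p t - w t|) <= `|p' t|.
  move=> t; case: ifP => hin.
    have := ler_normD (p' t) (p t - p' t); rewrite addrC subrK => h; lra.
  move: hin; rewrite inE => /negbT; rewrite negbK => /eqP ->.
  rewrite subr0; have := ler_normB (p t) (p' t); lra.
have hs := ler_sum (index_enum _) (fun t (_ : true) => hpt t).
have E1 : \sum_t (if t \in T then `|p t - p' t| else 0) = \sum_(t in T) `|p t - p' t|
  by rewrite [RHS]big_mkcond.
have E2 : \sum_t (if t \in T then 0 else `|p t - w t|) <= \sum_t `|p t - w t|.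
  by apply: ler_sum => t _; case: ifP.
rewrite !sumrB big_split /= -!mulr_sumr E1 in hs.
rewrite -/e in hs; lra.
Qed.

End Aux.

Theorem theorem2 (R : realType) (n s N : nat) (X : 'M[R]_(n, N)) (y : 'I_N -> R)
    (r : nat) :
  (1 <= n)%N -> (1 <= s)%N -> (1 <= N)%N -> (r <= N)%N ->
  \rank X = n ->
  xi s X y r < 1 / 2 ->
  forall (A A' : 'M[R]_(n, s)) (pi : {perm 'I_s}),
    comparable_with X y A A' pi ->
    forall nrm : 'M[R]_(n, s) -> R, is_norm nrm ->
    exists D : R, 0 < D /\
      nrm (colsub pi A' - A) <=
        (J X y A' - J X y A + 2 * delta X y r A) / (D * (1 - 2 * xi s X y r)).
Proof.
move=> _ _ _ _ hrk hxi A A' pi hc nrm hnrm.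
set c := 1 - 2 * xi s X y r.
have hc0 : 0 < c by rewrite /c; lra.
set e := \sum_t `|phi X y A t - phi X y A' t|.
have he0 : 0 <= e by rewrite sumr_ge0.
have hnum : c * e <= J X y A' - J X y A + 2 * delta X y r A.
  have : (c * e - (J X y A' - J X y A)) / 2 <= delta X y r A.
    apply: lb_le_inf.
      exists (\sum_t `|phi X y A t - 0|); exists (fun _ => 0); split=> //.
      by rewrite eq_card0 // => t; rewrite !inE eqxx.
    move=> d [w [hw ->]]; have := @key _ _ _ _ X y A A' r w hw; rewrite -/c -/e; lra.
  lra.
set M := nrm (colsub pi A' - A).
have hM0 : 0 <= M by apply: norm_ge0.
case: (eqVneq M 0) => hM.
  exists 1; split => //; rewrite hM mul1r; apply: divr_ge0; last exact: ltW.
  have := mulr_ge0 (ltW hc0) he0; lra.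
have hMp : 0 < M by rewrite lt0r hM hM0.
have hep : 0 < e.
  rewrite lt0r he0 andbT; apply/eqP => he; move: hM; rewrite /M.
  have hphi : forall t, phi X y A t = phi X y A' t.
    move=> t; apply/eqP; rewrite -subr_eq0 -normr_eq0; apply/eqP.
    exact: (psumr_eq0P (fun i _ => normr_ge0 _) he).
  by rewrite (@ident _ _ _ _ X y A A' pi hrk hc hphi) subrr norm_zero // eqxx.
exists (e / M); split; first by rewrite divr_gt0.
rewrite ler_pdivlMr; last by rewrite mulr_gt0 // divr_gt0.
have -> : M * (e / M * c) = c * e.
  by field; exact: hM.
exact: hnum.
Qed.
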